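(* Let $G$ be a finitely generated group with decidable word problem and $S$ a finite generating set of $G$. Then the infinite snake problem for $(G,S)$ is in $\Pi^0_1$.
   Context: The word problem of $G$ with respect to $S$ asks, given a word $w$ over $S\cup S^{-1}$, whether $w$ represents $1_G$. A tileset graph for $(G,S)$ is a finite multigraph $\Gamma=(A,B)$ whose edges are triples $(a,a',s)$ with $a,a'\in A$, $s\in S\cup S^{-1}$, such that $(a,a',s)\in B$ implies $(a',a,s^{-1})\in B$. A bi-infinite $\Gamma$-snake is a pair $(\omega,\zeta)$ with $\omega:\mathbb{Z}\to G$ injective and $\zeta:\mathbb{Z}\to A$ such that $d\omega_i:=\omega(i)^{-1}\omega(i+1)\in S\cup S^{-1}$ and $(\zeta(i),\zeta(i+1),d\omega_i)\in B$ for all $i$. The infinite snake problem for $(G,S)$: given $\Gamma$, decide whether a bi-infinite $\Gamma$-snake exists. *)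

(* Defs.v *)
(* Computability is modelled by an explicit syntax of
   mu-recursive functions with a relational big-step semantics (so that
   "decidable" / "Pi^0_1" are not trivialised by classical choice). *)
From Stdlib Require Import List Arith ZArith Lia.
Import ListNotations.

Inductive mucode : Type :=
| MZero : mucode
| MSucc : mucode
| MProj : nat -> mucode
| MComp : mucode -> list mucode -> mucode
| MPrec : mucode -> mucode -> mucode
| MMu   : mucode -> mucode.

Inductive mueval : mucode -> list nat -> nat -> Prop :=
| ev_zero v : mueval MZero v 0
| ev_succ x v : mueval MSucc (x :: v) (S x)
| ev_proj i v : i < length v -> mueval (MProj i) v (nth i v 0)
| ev_comp f gs v ws y :
    muevals gs v ws -> mueval f ws y -> mueval (MComp f gs) v y
| ev_prec0 f g v y : mueval f v y -> mueval (MPrec f g) (0 :: v) y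
| ev_precS f g n v z y :
    mueval (MPrec f g) (n :: v) z -> mueval g (n :: z :: v) y ->
    mueval (MPrec f g) (S n :: v) y
| ev_mu f v n :
    mueval f (n :: v) 0 ->
    (forall m, m < n -> exists r, mueval f (m :: v) (S r)) ->
    mueval (MMu f) v n
with muevals : list mucode -> list nat -> list nat -> Prop :=
| evs_nil v : muevals [] v []
| evs_cons g gs v w ws :
    mueval g v w -> muevals gs v ws -> muevals (g :: gs) v (w :: ws).

Definition decidable_set (P : nat -> Prop) : Prop :=
  exists c : mucode, forall n,
    (P n -> mueval c [n] 1) /\ (~ P n -> mueval c [n] 0).

Definition Pi01 (P : nat -> Prop) : Prop :=
  exists c : mucode,
    (forall n m, mueval c [n; m] 0 \/ mueval c [n; m] 1) /\
    (forall n, P n <-> forall m, mueval c [n; m] 0).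

Definition npair (x y : nat) : nat := (x + y) * (x + y + 1) / 2 + y.

Fixpoint enc_list (l : list nat) : nat :=
  match l with
  | [] => 0
  | x :: t => S (npair x (enc_list t))
  end.

Record is_group {G : Type} (mul : G -> G -> G) (one : G) (inv : G -> G) : Prop := {
  grp_assoc : forall x y z, mul x (mul y z) = mul (mul x y) z;
  grp_id_l  : forall x, mul one x = x;
  grp_inv_l : forall x, mul (inv x) x = one
}.

Section Words.
Context {G : Type} (mul : G -> G -> G) (one : G) (inv : G -> G).
(* The finite set S = {s 0, ..., s (k-1)}.  Letters of the alphabet
   S u S^{-1} are naturals l < 2k:  l < k stands for s l, and
   k <= l < 2k stands for (s (l-k))^{-1}. *)
Context (k : nat) (s : nat -> G).

Definition letter_val (l : nat) : G :=
  if l <? k then s l else inv (s (l - k)).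

Definition is_word (w : list nat) : Prop := Forall (fun l => l < 2 * k) w.

Definition word_val (w : list nat) : G :=
  fold_right (fun l acc => mul (letter_val l) acc) one w.

Definition generates : Prop :=
  forall g : G, exists w, is_word w /\ word_val w = g.

Definition decidable_word_problem : Prop :=
  exists P : nat -> Prop, decidable_set P /\
    forall w, is_word w -> (P (enc_list w) <-> word_val w = one).

(* A tileset graph: vertex set A = {0, ..., nverts-1}, edge list B of
   triples (a, a', l) with l a letter of S u S^{-1} (edge labelled by the
   group element letter_val l). *)
Record tileset := { nverts : nat; edges : list (nat * nat * nat) }.

Definition valid_tileset (T : tileset) : Prop :=
  (forall a a' l, In (a, a', l) (edges T) ->
     a < nverts T /\ a' < nverts T /\ l < 2 * k) /\
  (forall a a' l, In (a, a', l) (edges T) ->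
     exists l', In (a', a, l') (edges T) /\ letter_val l' = inv (letter_val l)).

Definition is_biinfinite_snake (T : tileset) (omega : Z -> G) (zeta : Z -> nat) : Prop :=
  (forall i j, omega i = omega j -> i = j) /\
  (forall i, zeta i < nverts T) /\
  (forall i, exists l, l < 2 * k /\
      mul (inv (omega i)) (omega (i + 1)%Z) = letter_val l /\
      exists l', In (zeta i, zeta (i + 1)%Z, l') (edges T) /\
                 letter_val l' = mul (inv (omega i)) (omega (i + 1)%Z)).

Definition has_snake (T : tileset) : Prop :=
  exists omega zeta, is_biinfinite_snake T omega zeta.

Definition enc_triple (t : nat * nat * nat) : nat :=
  match t with (a, a', l) => npair a (npair a' l) end.

Definition enc_tileset (T : tileset) : nat :=
  npair (nverts T) (enc_list (map enc_triple (edges T))).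

Definition infinite_snake_problem_Pi01 : Prop :=
  exists P : nat -> Prop, Pi01 P /\
    forall T : tileset, P (enc_tileset T) <-> (valid_tileset T /\ has_snake T).
End Words.

(* Main.v *)
Require Import Defs.
From Stdlib Require Import List Arith ZArith Lia.
Import ListNotations.
From Stdlib Require Import Classical ClassicalEpsilon.

Fixpoint mueval_det c v y (H : mueval c v y) {struct H} : forall y', mueval c v y' -> y = y'
with muevals_det gs v ws (H : muevals gs v ws) {struct H} : forall ws', muevals gs v ws' -> ws = ws'.
Proof.
- destruct H; intros y' H'; inversion H'; subst; try reflexivity.
  + match goal with HH : muevals gs v ?w |- _ =>
     assert (E: ws = w) by (apply (muevals_det _ _ _ H _ HH)) end. subst.
    match goal with HH : mueval f _ y' |- _ => apply (mueval_det _ _ _ H0 _ HH) end.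
  + match goal with HH : mueval f v y' |- _ => apply (mueval_det _ _ _ H _ HH) end.
  + match goal with HH : mueval (MPrec f g) (n :: v) ?w |- _ =>
     assert (E: z = w) by (apply (mueval_det _ _ _ H _ HH)) end. subst.
    match goal with HH : mueval g _ y' |- _ => apply (mueval_det _ _ _ H0 _ HH) end.
  + match goal with HH : forall m, m < y' -> _ |- _ => rename HH into H5 end.
    match goal with HH : mueval f (y' :: v) 0 |- _ => rename HH into H3 end.
    destruct (lt_eq_lt_dec n y') as [[Hlt|Heq]|Hlt]; auto.
    * destruct (H5 n Hlt) as [r Hr].
      pose proof (mueval_det _ _ _ H _ Hr). discriminate.
    * destruct (H0 y' Hlt) as [r Hr].
      pose proof (mueval_det _ _ _ Hr _ H3). discriminate.
- destruct H; intros ws' H'; inversion H'; subst; try reflexivity.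
  f_equal.
  + match goal with HH : mueval g v _ |- _ => apply (mueval_det _ _ _ H _ HH) end.
  + match goal with HH : muevals gs v _ |- _ => apply (muevals_det _ _ _ H0 _ HH) end.
Qed.

Inductive exp : Type :=
| Var : nat -> exp
| Const : nat -> exp
| Add : exp -> exp -> exp
| Mul : exp -> exp -> exp
| Sub : exp -> exp -> exp
| Wp : exp -> exp
| Let : exp -> exp -> exp
| Rec : exp -> exp -> exp -> exp
| Sum : exp -> exp -> exp
| Prod : exp -> exp -> exp
| BMu : exp -> exp -> exp.

Fixpoint primrec2 (a : nat) (g : nat -> nat -> nat) (k : nat) : nat :=
  match k with 0 => a | S k' => g k' (primrec2 a g k') end.
Fixpoint bsum (f : nat -> nat) (b : nat) : nat :=
  match b with 0 => 0 | S b' => bsum f b' + f b' end.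
Fixpoint bprod (f : nat -> nat) (b : nat) : nat :=
  match b with 0 => 1 | S b' => bprod f b' * f b' end.
Fixpoint findz (p : nat -> nat) (i fuel : nat) : nat :=
  match fuel with 0 => i | S f => match p i with 0 => i | _ => findz p (S i) f end end.
Definition minz p b := findz p 0 b.

Fixpoint den (wpf : nat -> nat) (e : exp) (v : list nat) : nat :=
  match e with
  | Var i => nth i v 0
  | Const k => k
  | Add a b => den wpf a v + den wpf b v
  | Mul a b => den wpf a v * den wpf b v
  | Sub a b => den wpf a v - den wpf b v
  | Wp a => wpf (den wpf a v)
  | Let a body => den wpf body (den wpf a v :: v)
  | Rec x base step => primrec2 (den wpf base v) (fun i acc => den wpf step (i :: acc :: v)) (den wpf x v)
  | Sum b body => bsum (fun i => den wpf body (i :: v)) (den wpf b v)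
  | Prod b body => bprod (fun i => den wpf body (i :: v)) (den wpf b v)
  | BMu b body => minz (fun x => den wpf body (x :: v)) (den wpf b v)
  end.

Fixpoint constc (k : nat) : mucode :=
  match k with 0 => MZero | S k' => MComp MSucc [constc k'] end.
Definition addc := MPrec (MProj 0) (MComp MSucc [MProj 1]).
Definition mulc := MPrec MZero (MComp addc [MProj 1; MProj 2]).
Definition predc := MPrec MZero (MProj 0).
Definition rsubc := MPrec (MProj 0) (MComp predc [MProj 1]).
Definition subc := MComp rsubc [MProj 1; MProj 0].
Definition projs k n := map MProj (seq k n).

Fixpoint compile (cw : mucode) (n : nat) (e : exp) : mucode :=
  match e with
  | Var i => if i <? n then MProj i else MZero
  | Const k => constc k
  | Add a b => MComp addc [compile cw n a; compile cw n b]
  | Mul a b => MComp mulc [compile cw n a; compile cw n b]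
  | Sub a b => MComp subc [compile cw n a; compile cw n b]
  | Wp a => MComp cw [compile cw n a]
  | Let a body => MComp (compile cw (S n) body) (compile cw n a :: projs 0 n)
  | Rec x base step => MComp (MPrec (compile cw n base) (compile cw (S (S n)) step)) (compile cw n x :: projs 0 n)
  | Sum b body => MComp (MPrec MZero (MComp addc [MProj 1; MComp (compile cw (S n) body) (MProj 0 :: projs 2 n)])) (compile cw n b :: projs 0 n)
  | Prod b body => MComp (MPrec (constc 1) (MComp mulc [MProj 1; MComp (compile cw (S n) body) (MProj 0 :: projs 2 n)])) (compile cw n b :: projs 0 n)
  | BMu b body => MMu (MComp mulc [compile cw (S n) body; MComp subc [MComp (compile cw n b) (projs 1 n); MProj 0]])
  end.

Lemma constc_ok k v : mueval (constc k) v k.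
Proof. induction k; simpl. constructor. econstructor. constructor. eassumption. constructor. constructor. Qed.

Lemma addc_ok x y : mueval addc [x; y] (x + y).
Proof.
  induction x; simpl.
  - constructor. replace y with (nth 0 [y] 0) at 2 by reflexivity. constructor. simpl; lia.
  - econstructor. apply IHx. econstructor. constructor.
    replace (x + y) with (nth 1 [x; x+y; y] 0) at 2 by reflexivity. constructor. simpl; lia.
    constructor. constructor.
Qed.

Lemma mulc_ok x y : mueval mulc [x; y] (x * y).
Proof.
  induction x; simpl.
  - constructor. constructor.
  - econstructor. apply IHx. econstructor. constructor.
    replace (x * y) with (nth 1 [x; x*y; y] 0) at 2 by reflexivity. constructor. simpl; lia.
    constructor. replace y with (nth 2 [x; x*y; y] 0) at 2 by reflexivity. constructor. simpl; lia.
    constructor. replace (y + x * y) with (x * y + y) by lia. apply addc_ok.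
Qed.

Lemma predc_ok x : mueval predc [x] (pred x).
Proof.
  destruct x; simpl. constructor. constructor.
  econstructor. 2: { replace x with (nth 0 [x; pred x] 0) at 2 by reflexivity. constructor. simpl; lia. }
  destruct x; simpl. constructor. constructor.
  econstructor. 2: { replace x with (nth 0 [x; pred x] 0) at 3 by reflexivity. constructor. simpl; lia. }
Abort.

Lemma predc_ok x : mueval predc [x] (pred x).
Proof.
  assert (forall x, mueval predc [x] (pred x) /\ mueval predc [S x] x); [|apply H].
  induction x0.
  - split. constructor. constructor. econstructor. constructor. constructor.
    replace 0 with (nth 0 [0; 0] 0) at 2 by reflexivity. constructor. simpl; lia.
  - split. apply IHx0. econstructor. apply IHx0.
    replace (S x0) with (nth 0 [S x0; x0] 0) at 2 by reflexivity. constructor. simpl; lia.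
Qed.

Lemma rsubc_ok y x : mueval rsubc [y; x] (x - y).
Proof.
  induction y; simpl.
  - replace (x - 0) with (nth 0 [x] 0) by (simpl; lia). constructor. constructor. simpl; lia.
  - econstructor. apply IHy. econstructor. constructor.
    replace (x - y) with (nth 1 [y; x - y; x] 0) at 2 by reflexivity. constructor. simpl; lia.
    constructor. replace (x - S y) with (pred (x - y)) by lia. apply predc_ok.
Qed.

Lemma subc_ok x y : mueval subc [x; y] (x - y).
Proof.
  econstructor. constructor.
  replace y with (nth 1 [x; y] 0) at 2 by reflexivity. constructor. simpl; lia.
  constructor. replace x with (nth 0 [x; y] 0) at 2 by reflexivity. constructor. simpl; lia.
  constructor. apply rsubc_ok.
Qed.

Lemma skipn_nth_cons (v : list nat) j : j < length v -> skipn j v = nth j v 0 :: skipn (S j) v.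
Proof. revert j; induction v; intros j Hj; simpl in *. lia.
  destruct j. reflexivity. simpl. apply IHv; lia. Qed.

Lemma projs_ok k w v : length w = k -> muevals (projs k (length v)) (w ++ v) v.
Proof.
  intros Hw. unfold projs.
  assert (forall j, j <= length v -> muevals (map MProj (seq (k + j) (length v - j))) (w ++ v) (skipn j v)).
  2: { specialize (H 0). rewrite Nat.add_0_r, Nat.sub_0_r in H. apply H; lia. }
  intros j Hj. remember (length v - j) as r. revert j Hj Heqr.
  induction r; intros j Hj Heqr.
  - simpl. rewrite skipn_all2 by lia. constructor.
  - simpl. assert (Hs: skipn j v = nth j v 0 :: skipn (S j) v).
    { apply skipn_nth_cons. lia. }
    rewrite Hs. constructor.
    + replace (nth j v 0) with (nth (k + j) (w ++ v) 0).
      constructor. rewrite length_app; lia.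
      rewrite app_nth2 by lia. f_equal. lia.
    + replace (S (k + j)) with (k + S j) by lia. apply IHr; lia.
Qed.

Lemma projs0_ok v : muevals (projs 0 (length v)) v v.
Proof. apply (projs_ok 0 [] v). reflexivity. Qed.

Fixpoint findz_spec_aux p i fuel :
  let r := findz p i fuel in i <= r <= i + fuel /\ (p r = 0 \/ r = i + fuel) /\ (forall m, i <= m < r -> p m <> 0).
Proof.
  destruct fuel; simpl.
  - split. lia. split. right; lia. intros; lia.
  - destruct (p i) eqn:E.
    + split. lia. split. left; auto. intros; lia.
    + destruct (findz_spec_aux p (S i) fuel) as [H1 [H2 H3]].
      split. lia. split. destruct H2; [left|right]; lia.
      intros m Hm. destruct (Nat.eq_dec m i). subst. rewrite E; discriminate. apply H3; lia.
Qed.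

Lemma minz_spec p b : minz p b <= b /\ (p (minz p b) = 0 \/ minz p b = b) /\ (forall m, m < minz p b -> p m <> 0).
Proof.
  unfold minz. destruct (findz_spec_aux p 0 b) as [H1 [H2 H3]]. split. lia. split. destruct H2; [left|right]; lia.
  intros; apply H3; lia.
Qed.

Lemma mueval_eq c v y y' : mueval c v y -> y = y' -> mueval c v y'.
Proof. intros; subst; auto. Qed.

Lemma compile_ok cw wpf (Hw : forall x, mueval cw [x] (wpf x)) e :
  forall v, mueval (compile cw (length v) e) v (den wpf e v).
Proof.
  induction e; intros v; simpl.
  - destruct (Nat.ltb_spec n (length v)). constructor; auto.
    rewrite nth_overflow by lia. constructor.
  - apply constc_ok.
  - econstructor. constructor. apply IHe1. constructor. apply IHe2. constructor. apply addc_ok.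
  - econstructor. constructor. apply IHe1. constructor. apply IHe2. constructor. apply mulc_ok.
  - econstructor. constructor. apply IHe1. constructor. apply IHe2. constructor. apply subc_ok.
  - econstructor. constructor. apply IHe. constructor. apply Hw.
  - econstructor. constructor. apply IHe1. apply projs0_ok. apply (IHe2 (den wpf e1 v :: v)).
  - econstructor. constructor. apply IHe1. apply projs0_ok.
    generalize (den wpf e1 v). intros k. induction k; simpl.
    + constructor. apply IHe2.
    + econstructor. apply IHk. apply (IHe3 (k :: _ :: v)).
  - econstructor. constructor. apply IHe1. apply projs0_ok.
    generalize (den wpf e1 v). intros k. induction k; simpl.
    + constructor. constructor.
    + econstructor. apply IHk. econstructor. constructor.
      replace (bsum _ k) with (nth 1 (k :: bsum (fun i => den wpf e2 (i :: v)) k :: v) 0) at 2 by reflexivity.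
      constructor. simpl; lia.
      constructor. econstructor. constructor.
      replace k with (nth 0 (k :: bsum (fun i => den wpf e2 (i :: v)) k :: v) 0) at 2 by reflexivity.
      constructor. simpl; lia.
      apply (projs_ok 2 [_; _] v). reflexivity.
      apply (IHe2 (k :: v)). constructor. exact (addc_ok _ _).
  - econstructor. constructor. apply IHe1. apply projs0_ok.
    generalize (den wpf e1 v). intros k. induction k; simpl.
    + constructor. exact (constc_ok 1 v).
    + econstructor. apply IHk. econstructor. constructor.
      replace (bprod _ k) with (nth 1 (k :: bprod (fun i => den wpf e2 (i :: v)) k :: v) 0) at 2 by reflexivity.
      constructor. simpl; lia.
      constructor. econstructor. constructor.
      replace k with (nth 0 (k :: bprod (fun i => den wpf e2 (i :: v)) k :: v) 0) at 2 by reflexivity.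
      constructor. simpl; lia.
      apply (projs_ok 2 [_; _] v). reflexivity.
      apply (IHe2 (k :: v)). constructor. exact (mulc_ok _ _).
  - set (p := fun x => den wpf e2 (x :: v)). set (b := den wpf e1 v).
    destruct (minz_spec p b) as [H1 [H2 H3]].
    assert (G : forall x, mueval (MComp mulc [compile cw (S (length v)) e2; MComp subc [MComp (compile cw (length v) e1) (projs 1 (length v)); MProj 0]]) (x :: v) (p x * (b - x))).
    { intros x. econstructor. constructor. apply (IHe2 (x :: v)). constructor.
      econstructor. constructor. econstructor. apply (projs_ok 1 [x] v). reflexivity. apply IHe1.
      constructor. replace x with (nth 0 (x :: v) 0) at 2 by reflexivity. constructor. simpl; lia.
      constructor. apply subc_ok. constructor. apply mulc_ok. }
    constructor.
    + eapply mueval_eq. apply G.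
      destruct H2 as [H2|H2]; rewrite H2; lia.
    + intros m Hm. exists (pred (p m * (b - m))).
      eapply mueval_eq. apply G.
      specialize (H3 m Hm). assert (p m * (b - m) <> 0) by (intro Hc; apply Nat.mul_eq_0 in Hc; lia). destruct (p m * (b - m)); [congruence|reflexivity].
Qed.


Definition Tri e := Rec e (Const 0) (Add (Var 1) (Add (Var 0) (Const 1))).
Definition S_ := BMu (Var 0) (Sub (Const 1) (Sub (Tri (Add (Var 0) (Const 1))) (Var 1))).
Definition Fst e := Let e (Let S_ (Sub (Var 0) (Sub (Var 1) (Tri (Var 0))))).
Definition Snd e := Let e (Let S_ (Sub (Var 1) (Tri (Var 0)))).
Definition Npair a b := Add (Tri (Add a b)) b.
Definition Cons a b := Add (Npair a b) (Const 1).
Definition Pred a := Sub a (Const 1).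
Definition Hd e := Fst (Pred e).
Definition Tl e := Snd (Pred e).
Definition Itl j c := Rec j c (Tl (Var 1)).
Definition Nth j c := Hd (Itl j c).
Definition Vi E j := Sub (Const 1) (Itl j E).
Definition Ed E j := Nth j E.
Definition Src e := Fst e.
Definition Tgt e := Fst (Snd e).
Definition Lab e := Snd (Snd e).
Definition Ltn a b := Sub (Add a (Const 1)) b.
Definition Eqn a b := Add (Sub a b) (Sub b a).

Definition Body1 k := Mul (Sub (Const 1) (Vi (Var 1) (Var 0)))
  (Add (Add (Ltn (Src (Ed (Var 1) (Var 0))) (Var 2)) (Ltn (Tgt (Ed (Var 1) (Var 0))) (Var 2)))
       (Ltn (Lab (Ed (Var 1) (Var 0))) (Const (2 * k)))).
Definition Inner2 := Add (Add (Add (Vi (Var 2) (Var 0))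
     (Eqn (Src (Ed (Var 2) (Var 0))) (Tgt (Ed (Var 2) (Var 1)))))
     (Eqn (Tgt (Ed (Var 2) (Var 0))) (Src (Ed (Var 2) (Var 1)))))
  (Sub (Const 1) (Wp (Cons (Lab (Ed (Var 2) (Var 0))) (Cons (Lab (Ed (Var 2) (Var 1))) (Const 0))))).
Definition Body2 := Mul (Sub (Const 1) (Vi (Var 1) (Var 0))) (Prod (Var 1) Inner2).
Definition BndE := Rec (Var 3) (Const 0) (Cons (Var 2) (Var 1)).
Definition P1 := Sum (Var 4) (Vi (Var 2) (Nth (Var 0) (Var 1))).
Definition P2 := Sum (Sub (Var 4) (Const 1))
  (Eqn (Tgt (Ed (Var 2) (Nth (Var 0) (Var 1)))) (Src (Ed (Var 2) (Nth (Add (Var 0) (Const 1)) (Var 1))))).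
Definition SegStep := Cons (Lab (Ed (Var 5) (Nth (Sub (Var 3) (Add (Var 0) (Const 1))) (Var 4)))) (Var 1).
Definition P3 := Sum (Add (Var 4) (Const 1)) (Sum (Var 0) (Wp (Rec (Add (Var 0) (Const 1)) (Const 0) SegStep))).
Definition SnkE := Prod (Add BndE (Const 1)) (Add (Add P1 P2) P3).
Definition R_exp k := Let (Fst (Var 0)) (Let (Snd (Var 1))
   (Sub (Const 1) (Sub (Const 1) (Add (Add (Sum (Var 0) (Body1 k)) (Sum (Var 0) Body2)) SnkE)))).

Definition tri k := primrec2 0 (fun i acc => acc + (i + 1)) k.
Definition sfun y := minz (fun x => 1 - (tri (x + 1) - y)) y.
Definition snd_ y := let s := sfun y in y - tri s.
Definition fst_ y := let s := sfun y in s - (y - tri s).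
Definition npair' x y := tri (x + y) + y.
Definition cons_ x t := npair' x t + 1.
Definition tl_ c := snd_ (c - 1).
Definition hd_ c := fst_ (c - 1).
Definition itl j c := primrec2 c (fun _ acc => tl_ acc) j.
Definition nth_ j c := hd_ (itl j c).
Definition vi E j := 1 - itl j E.
Definition ed E j := nth_ j E.
Definition src e := fst_ e.
Definition tgt e := fst_ (snd_ e).
Definition lab e := snd_ (snd_ e).
Definition ltn a b := a + 1 - b.
Definition eqn a b := (a - b) + (b - a).
Definition C1 k V E := bsum (fun j => (1 - vi E j) * (ltn (src (ed E j)) V + ltn (tgt (ed E j)) V + ltn (lab (ed E j)) (2*k))) E.
Definition C2 wpf E := bsum (fun j => (1 - vi E j) * bprod (fun j' => vi E j' + eqn (src (ed E j')) (tgt (ed E j)) + eqn (tgt (ed E j')) (src (ed E j)) + (1 - wpf (cons_ (lab (ed E j')) (cons_ (lab (ed E j)) 0)))) E) E.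
Definition bnd E L := primrec2 0 (fun _ acc => cons_ E acc) L.
Definition segw E x j d := primrec2 0 (fun t acc => cons_ (lab (ed E (nth_ (j - (t + 1)) x))) acc) d.
Definition snkc wpf E L x := bsum (fun i => vi E (nth_ i x)) L + bsum (fun i => eqn (tgt (ed E (nth_ i x))) (src (ed E (nth_ (i + 1) x)))) (L - 1) + bsum (fun j => bsum (fun d => wpf (segw E x j (d + 1))) j) (L + 1).
Definition Snk wpf E L := bprod (fun x => snkc wpf E L x) (bnd E L + 1).
Definition Rs wpf k n L := 1 - (1 - (C1 k (fst_ n) (snd_ n) + C2 wpf (snd_ n) + Snk wpf (snd_ n) L)).

Lemma den_R wpf k n L : den wpf (R_exp k) [n; L] = Rs wpf k n L.
Proof. reflexivity. Qed.


Lemma tri_S s : tri (S s) = tri s + (s + 1).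
Proof. reflexivity. Qed.
Lemma tri_mono a b : a <= b -> tri a <= tri b.
Proof. induction 1. lia. rewrite tri_S. lia. Qed.
Lemma tri_ge s : s <= tri s.
Proof. induction s. simpl. lia. rewrite tri_S. lia. Qed.
Lemma tri_eq s : tri s = s * (s + 1) / 2.
Proof.
  assert (H: 2 * tri s = s * (s + 1)).
  { induction s. reflexivity. rewrite tri_S. nia. }
  rewrite <- H. rewrite Nat.mul_comm, Nat.div_mul; lia.
Qed.

Lemma sfun_eq s b : b <= s -> sfun (tri s + b) = s.
Proof.
  intros Hb. unfold sfun.
  set (p := fun x => 1 - (tri (x + 1) - (tri s + b))).
  destruct (minz_spec p (tri s + b)) as [H1 [H2 H3]].
  set (r := minz p (tri s + b)) in *.
  assert (Hps : p s = 0). { unfold p. replace (s + 1) with (S s) by lia. rewrite tri_S. lia. }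
  assert (Hlt : forall m, m < s -> p m = 1).
  { intros m Hm. unfold p. pose proof (tri_mono (m + 1) s ltac:(lia)). lia. }
  destruct (lt_eq_lt_dec r s) as [[Hr|Hr]|Hr]; auto.
  - rewrite (Hlt r Hr) in H2. pose proof (tri_ge s). lia.
  - exfalso. apply (H3 s Hr). exact Hps.
Qed.

Lemma npair'_eq x y : npair' x y = npair x y.
Proof. unfold npair', npair. rewrite tri_eq. reflexivity. Qed.

Lemma snd_npair x y : snd_ (npair x y) = y.
Proof. rewrite <- npair'_eq. unfold snd_, npair'. rewrite sfun_eq by lia. lia. Qed.
Lemma fst_npair x y : fst_ (npair x y) = x.
Proof. rewrite <- npair'_eq. unfold fst_, npair'. rewrite sfun_eq by lia. lia. Qed.

Lemma cons_enc x t : cons_ x (enc_list t) = enc_list (x :: t).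
Proof. unfold cons_. rewrite npair'_eq. simpl. lia. Qed.

Lemma tl_enc x t : tl_ (enc_list (x :: t)) = enc_list t.
Proof. unfold tl_. simpl. rewrite Nat.sub_0_r. apply snd_npair. Qed.
Lemma hd_enc x t : hd_ (enc_list (x :: t)) = x.
Proof. unfold hd_. simpl. rewrite Nat.sub_0_r. apply fst_npair. Qed.
Lemma tl_0 : tl_ 0 = 0.
Proof. reflexivity. Qed.
Lemma hd_0 : hd_ 0 = 0.
Proof. reflexivity. Qed.

Lemma tl_skipn j (l : list nat) : tl_ (enc_list (skipn j l)) = enc_list (skipn (S j) l).
Proof.
  revert l; induction j; intros l.
  - destruct l. reflexivity. simpl skipn. apply tl_enc.
  - destruct l. reflexivity. simpl skipn. apply IHj.
Qed.

Lemma itl_enc j l : itl j (enc_list l) = enc_list (skipn j l).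
Proof.
  induction j. reflexivity.
  change (itl (S j) (enc_list l)) with (tl_ (itl j (enc_list l))). rewrite IHj.
  apply tl_skipn.
Qed.

Lemma nth_enc j l : nth_ j (enc_list l) = nth j l 0.
Proof.
  unfold nth_. rewrite itl_enc. revert l; induction j; intros l.
  - destruct l. reflexivity. apply hd_enc.
  - destruct l. reflexivity. apply IHj.
Qed.

Lemma enc_pos l : l <> [] -> 1 <= enc_list l.
Proof. destruct l. congruence. simpl. lia. Qed.

Lemma vi_enc l j : vi (enc_list l) j = if j <? length l then 0 else 1.
Proof.
  unfold vi. rewrite itl_enc. destruct (Nat.ltb_spec j (length l)).
  - assert (skipn j l <> []). { intro Hc. apply (f_equal (@length nat)) in Hc. rewrite length_skipn in Hc. simpl in Hc. lia. }
    pose proof (enc_pos _ H0). lia.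
  - rewrite skipn_all2 by lia. reflexivity.
Qed.

Lemma npair_le_r x y : y <= npair x y.
Proof. rewrite <- npair'_eq. unfold npair'. lia. Qed.

Lemma npair_mono x y x' y' : x <= x' -> y <= y' -> npair x y <= npair x' y'.
Proof. intros. rewrite <- !npair'_eq. unfold npair'. pose proof (tri_mono (x+y) (x'+y') ltac:(lia)). lia. Qed.

Lemma length_le_enc l : length l <= enc_list l.
Proof. induction l; simpl. lia. pose proof (npair_le_r a (enc_list l)). lia. Qed.

Lemma enc_mono l1 l2 : Forall2 le l1 l2 -> enc_list l1 <= enc_list l2.
Proof. induction 1; simpl. lia. pose proof (npair_mono _ _ _ _ H IHForall2). lia. Qed.


Lemma bsum0 f b : bsum f b = 0 <-> forall i, i < b -> f i = 0.
Proof.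
  induction b; simpl. split; intros; auto; lia.
  rewrite Nat.eq_add_0, IHb. split.
  - intros [H1 H2] i Hi. destruct (Nat.eq_dec i b). subst; auto. apply H1; lia.
  - intros H. split. intros; apply H; lia. apply H; lia.
Qed.

Lemma bprod0 f b : bprod f b = 0 <-> exists i, i < b /\ f i = 0.
Proof.
  induction b; simpl. split. discriminate. intros [i [Hi _]]; lia.
  rewrite Nat.mul_eq_0, IHb. split.
  - intros [[i [Hi H]]|H]. exists i; split; auto; lia. exists b; split; auto.
  - intros [i [Hi H]]. destruct (Nat.eq_dec i b). subst; auto. left; exists i; split; auto; lia.
Qed.

Section Math.
Variables (G : Type) (mul : G -> G -> G) (one : G) (inv : G -> G).
Hypothesis HG : is_group mul one inv.
Variables (k : nat) (s : nat -> G) (Pw : nat -> Prop) (wpf : nat -> nat).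
Hypothesis Hwpf : forall x, (wpf x = 1 /\ Pw x) \/ (wpf x = 0 /\ ~ Pw x).
Hypothesis HPw : forall w, is_word k w -> (Pw (enc_list w) <-> word_val mul one inv k s w = one).

Lemma mul_inv_r x : mul x (inv x) = one.
Proof.
  destruct HG as [A L I].
  rewrite <- (L (mul x (inv x))). rewrite <- (I (inv x)) at 1.
  rewrite <- A. rewrite (A (inv x) x (inv x)). rewrite I, L. apply I.
Qed.
Lemma mul_one_r x : mul x one = x.
Proof. destruct HG as [A L I]. rewrite <- (I x), A, mul_inv_r, L. reflexivity. Qed.
Lemma inv_uniq x y : mul x y = one -> x = inv y.
Proof.
  intros H. destruct HG as [A L I].
  rewrite <- (mul_one_r x), <- (mul_inv_r y), A, H, L. reflexivity.
Qed.
Lemma inv_mul_eq x y : mul (inv x) y = one -> x = y.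
Proof.
  intros H. destruct HG as [A L I].
  rewrite <- (L y), <- (mul_inv_r x), <- A, H, mul_one_r. reflexivity.
Qed.

Variable T : tileset.
Definition edgs := edges T.
Definition NN := length edgs.
Definition VV := nverts T.
Definition EE := enc_list (map enc_triple edgs).
Definition trp j := nth j edgs (0,0,0).
Definition Valid1 := forall a a' l, In (a,a',l) edgs -> a < VV /\ a' < VV /\ l < 2 * k.

Lemma ed_E j : j < NN -> ed EE j = enc_triple (trp j).
Proof.
  intros Hj. unfold ed, EE, trp. rewrite nth_enc.
  change 0 with (enc_triple (0,0,0)). apply map_nth.
Qed.

Lemma src_enc t : src (enc_triple t) = fst (fst t).
Proof. destruct t as [[a b] c]. unfold src. simpl. apply fst_npair. Qed.
Lemma tgt_enc t : tgt (enc_triple t) = snd (fst t).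
Proof. destruct t as [[a b] c]. unfold tgt. simpl. rewrite snd_npair. apply fst_npair. Qed.
Lemma lab_enc t : lab (enc_triple t) = snd t.
Proof. destruct t as [[a b] c]. unfold lab. simpl. rewrite !snd_npair. reflexivity. Qed.

Lemma NN_le_EE : NN <= EE.
Proof. unfold NN, EE. pose proof (length_le_enc (map enc_triple edgs)). rewrite length_map in H. exact H. Qed.

Lemma vi_EE j : vi EE j = if j <? NN then 0 else 1.
Proof. unfold EE. rewrite vi_enc, length_map. reflexivity. Qed.

Lemma trp_In j : j < NN -> In (trp j) edgs.
Proof. intros; apply nth_In; auto. Qed.

Lemma Valid1_iff : Valid1 <-> forall j, j < NN -> fst (fst (trp j)) < VV /\ snd (fst (trp j)) < VV /\ snd (trp j) < 2 * k.
Proof.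
  split.
  - intros H j Hj. pose proof (trp_In j Hj). destruct (trp j) as [[a b] c]. apply H; auto.
  - intros H a a' l Hin. destruct (In_nth _ _ (0,0,0) Hin) as [j [Hj Ht]].
    specialize (H j Hj). unfold trp in H. rewrite Ht in H. exact H.
Qed.

Lemma C1_iff : C1 k VV EE = 0 <-> Valid1.
Proof.
  rewrite Valid1_iff. unfold C1. rewrite bsum0. split.
  - intros H j Hj. specialize (H j ltac:(pose proof NN_le_EE; lia)).
    rewrite vi_EE in H. destruct (Nat.ltb_spec j NN); try lia.
    rewrite ed_E in H by auto. rewrite src_enc, tgt_enc, lab_enc in H. unfold ltn in H. lia.
  - intros H j Hj. rewrite vi_EE. destruct (Nat.ltb_spec j NN); try lia.
    rewrite ed_E by auto. rewrite src_enc, tgt_enc, lab_enc. unfold ltn. specialize (H j H0). lia.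
Qed.

Definition Valid2 := forall a a' l, In (a, a', l) edgs ->
     exists l', In (a', a, l') edgs /\ letter_val inv k s l' = inv (letter_val inv k s l).

Lemma pair_word l' l : l' < 2 * k -> l < 2 * k ->
  (wpf (cons_ l' (cons_ l 0)) = 1 <-> letter_val inv k s l' = inv (letter_val inv k s l)).
Proof.
  intros H1 H2. change 0 with (enc_list []). rewrite !cons_enc.
  assert (Hw : is_word k [l'; l]) by (repeat constructor; auto).
  destruct (Hwpf (enc_list [l'; l])) as [[E P]|[E P]]; rewrite E.
  - split; auto. intros _. apply inv_uniq. apply HPw in P; auto.
    unfold word_val in P. simpl in P. rewrite mul_one_r in P. exact P.
  - split. discriminate. intros Hc. exfalso. apply P. apply HPw; auto.
    unfold word_val. simpl. rewrite mul_one_r, Hc. destruct HG; auto.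
Qed.

Lemma C2_iff : Valid1 -> (C2 wpf EE = 0 <-> Valid2).
Proof.
  intros HV. pose proof HV as HV'. rewrite Valid1_iff in HV'.
  unfold C2, Valid2. rewrite bsum0. split.
  - intros H a a' l Hin. destruct (In_nth _ _ (0,0,0) Hin) as [j [Hj Ht]].
    specialize (H j ltac:(pose proof NN_le_EE; fold NN in Hj; lia)).
    rewrite vi_EE in H. fold NN in Hj. destruct (Nat.ltb_spec j NN) as [HjN|]; try lia.
    simpl in H. rewrite Nat.add_0_r in H. apply bprod0 in H. destruct H as [j' [Hj' H]].
    rewrite vi_EE in H. destruct (Nat.ltb_spec j' NN) as [Hj'N|]; try lia.
    rewrite !ed_E in H by auto. rewrite !src_enc, !tgt_enc, !lab_enc in H.
    unfold trp in H. rewrite Ht in H. simpl in H. unfold eqn in H.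
    assert (Hw1 : wpf (cons_ (snd (trp j')) (cons_ l 0)) = 1).
    { unfold trp. destruct (Hwpf (cons_ (snd (nth j' edgs (0, 0, 0))) (cons_ l 0))) as [[E _]|[E _]]; rewrite E in H |- *; simpl in H; lia. }
    exists (snd (trp j')). split.
    + pose proof (trp_In j' Hj'N) as Hin2. unfold trp in *. destruct (nth j' edgs (0,0,0)) as [[b b'] c] eqn:Et. simpl in *.
      replace b with a' in Hin2 by lia. replace b' with a in Hin2 by lia. exact Hin2.
    + destruct (HV' j' Hj'N) as [_ [_ Hl']]. destruct (HV' j Hj) as [_ [_ Hl]].
      unfold trp in Hl. rewrite Ht in Hl. simpl in Hl.
      apply pair_word; auto.
  - intros H j Hj. rewrite vi_EE. destruct (Nat.ltb_spec j NN); [|lia].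
    simpl. rewrite Nat.add_0_r. apply bprod0.
    pose proof (trp_In j H0). destruct (trp j) as [[a a'] l] eqn:Et.
    destruct (H a a' l H1) as [l' [Hin' Hl']].
    destruct (In_nth _ _ (0,0,0) Hin') as [j' [Hj' Ht']]. fold NN in Hj'.
    exists j'. split. pose proof NN_le_EE; lia.
    rewrite vi_EE. destruct (Nat.ltb_spec j' NN); [|lia].
    rewrite !ed_E by auto. rewrite !src_enc, !tgt_enc, !lab_enc.
    unfold trp. rewrite Ht'. fold (trp j). rewrite Et. simpl. unfold eqn.
    assert (wpf (cons_ l' (cons_ l 0)) = 1).
    { apply pair_word. apply (HV a' a l' Hin'). apply (HV a a' l H1). auto. }
    rewrite H3. rewrite !Nat.sub_diag. reflexivity.
Qed.

Definition labf (f : nat -> nat) i := snd (trp (f i)).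
Definition FS L (f : nat -> nat) :=
  (forall i, i < L -> f i < NN) /\
  (forall i, i + 1 < L -> snd (fst (trp (f i))) = fst (fst (trp (f (i + 1))))) /\
  (forall i j, i < j <= L -> word_val mul one inv k s (map (labf f) (seq i (j - i))) <> one).

Lemma segw_eq E x j d : d <= j -> segw E x j d = enc_list (map (fun t => lab (ed E (nth_ t x))) (seq (j - d) d)).
Proof.
  induction d; intros Hd. reflexivity.
  change (segw E x j (S d)) with (cons_ (lab (ed E (nth_ (j - (d + 1)) x))) (segw E x j d)).
  rewrite IHd by lia. rewrite cons_enc. f_equal.
  replace (j - S d) with (j - (d + 1)) by lia. simpl. f_equal. f_equal. f_equal. lia.
Qed.

Lemma bnd_eq E L : bnd E L = enc_list (repeat E L).
Proof. induction L. reflexivity. change (bnd E (S L)) with (cons_ E (bnd E L)). rewrite IHL, cons_enc. reflexivity. Qed.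

Lemma Forall2_repeat (l : list nat) E : Forall (fun y => y <= E) l -> Forall2 le l (repeat E (length l)).
Proof. induction 1; simpl; constructor; auto. Qed.

Lemma nth_map_seq0 (f : nat -> nat) L t : t < L -> nth t (map f (seq 0 L)) 0 = f t.
Proof.
  intros Ht. rewrite nth_indep with (d' := f 0) by (rewrite length_map, length_seq; lia).
  rewrite map_nth, seq_nth by lia. reflexivity.
Qed.

Lemma labf_word f L i j : Valid1 -> (forall t, t < L -> f t < NN) -> j <= L ->
  is_word k (map (labf f) (seq i (j - i))).
Proof.
  intros HV Hf Hj. unfold is_word. apply Forall_forall. intros y Hy.
  apply in_map_iff in Hy. destruct Hy as [t [Ht Hin]]. apply in_seq in Hin. subst y.
  unfold labf. pose proof (trp_In (f t) (Hf t ltac:(lia))). destruct (trp (f t)) as [[a b] c]. apply (HV a b c H).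
Qed.

Lemma Snk_iff L : Valid1 -> (Snk wpf EE L = 0 <-> exists f, FS L f).
Proof.
  intros HV. unfold Snk. rewrite bprod0. split.
  - intros [x [Hx H]]. unfold snkc in H. rewrite !Nat.eq_add_0, !bsum0 in H.
    destruct H as [[HA HB] HC].
    set (f := fun i => nth_ i x).
    assert (Hf : forall i, i < L -> f i < NN).
    { intros i Hi. specialize (HA i Hi). rewrite vi_EE in HA. unfold f. destruct (Nat.ltb_spec (nth_ i x) NN); auto; lia. }
    exists f. split; [exact Hf|split].
    + intros i Hi. specialize (HB i ltac:(lia)). fold (f i) in HB. fold (f (i + 1)) in HB.
      rewrite !ed_E in HB by (apply Hf; lia). rewrite tgt_enc, src_enc in HB. unfold eqn in HB. lia.
    + intros i j Hij Hw. specialize (HC j ltac:(lia)). rewrite bsum0 in HC.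
      specialize (HC (j - i - 1) ltac:(lia)). replace (j - i - 1 + 1) with (j - i) in HC by lia.
      rewrite segw_eq in HC by lia. replace (j - (j - i)) with i in HC by lia.
      erewrite map_ext_in in HC.
      2: { intros t Ht. apply in_seq in Ht. fold (f t). rewrite ed_E by (apply Hf; lia). rewrite lab_enc. reflexivity. }
      change (map (fun t => snd (trp (f t))) (seq i (j - i))) with (map (labf f) (seq i (j - i))) in HC.
      destruct (Hwpf (enc_list (map (labf f) (seq i (j - i))))) as [[E P]|[E P]]; [lia|].
      apply P. apply HPw. apply (labf_word f L); auto; lia. exact Hw.
  - intros [f [Hf [Hc Hi]]].
    set (x := enc_list (map f (seq 0 L))).
    assert (Hn : forall t, t < L -> nth_ t x = f t).
    { intros t Ht. unfold x. rewrite nth_enc. apply nth_map_seq0; auto. }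
    exists x. split.
    { assert (x <= bnd EE L); [|lia]. rewrite bnd_eq. unfold x.
      replace L with (length (map f (seq 0 L))) at 2 by (rewrite length_map, length_seq; auto).
      apply enc_mono, Forall2_repeat. apply Forall_forall. intros y Hy.
      apply in_map_iff in Hy. destruct Hy as [t [Ht Hin]]. apply in_seq in Hin. subst y.
      pose proof (Hf t ltac:(lia)). pose proof NN_le_EE. lia. }
    unfold snkc. rewrite !Nat.eq_add_0, !bsum0. split; [split|].
    + intros t Ht. rewrite Hn by auto. rewrite vi_EE. destruct (Nat.ltb_spec (f t) NN); auto. specialize (Hf t Ht). lia.
    + intros t Ht. rewrite !Hn by lia. rewrite !ed_E by (apply Hf; lia). rewrite tgt_enc, src_enc.
      rewrite (Hc t ltac:(lia)). unfold eqn. lia.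
    + intros j Hj. rewrite bsum0. intros d Hd.
      rewrite segw_eq by lia.
      erewrite map_ext_in.
      2: { intros t Ht. apply in_seq in Ht. rewrite Hn by lia. rewrite ed_E by (apply Hf; lia). rewrite lab_enc. reflexivity. }
      change (map (fun t => snd (trp (f t))) (seq (j - (d + 1)) (d + 1))) with (map (labf f) (seq (j - (d + 1)) (d + 1))).
      replace (d + 1) with (j - (j - (d + 1))) at 2 by lia.
      destruct (Hwpf (enc_list (map (labf f) (seq (j - (d + 1)) (j - (j - (d + 1))))))) as [[E P]|[E P]]; [|exact E].
      exfalso. apply HPw in P. apply (Hi (j - (d + 1)) j ltac:(lia) P).
      apply (labf_word f L); auto; lia.
Qed.

Lemma seq_map_add (g : nat -> nat) a i n : map (fun t => g (a + t)) (seq i n) = map g (seq (a + i) n).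
Proof. revert i; induction n; intros i; simpl. reflexivity. f_equal. rewrite IHn. f_equal. f_equal. lia. Qed.

Lemma FS_shift L L' f a : FS L f -> a + L' <= L -> FS L' (fun i => f (a + i)).
Proof.
  intros [H1 [H2 H3]] Ha. split; [|split].
  - intros i Hi. apply H1. lia.
  - intros i Hi. replace (a + (i + 1)) with (a + i + 1) by lia. apply H2. lia.
  - intros i j Hij. unfold labf. rewrite (seq_map_add (fun t => snd (trp (f t)))).
    replace (j - i) with ((a + j) - (a + i)) by lia. apply H3. lia.
Qed.

Lemma FS_ext L f g : FS L f -> (forall i, i < L -> f i = g i) -> FS L g.
Proof.
  intros [H1 [H2 H3]] He. split; [|split].
  - intros i Hi. rewrite <- He by auto. auto.
  - intros i Hi. rewrite <- !He by lia. auto.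
  - intros i j Hij. erewrite map_ext_in. apply (H3 i j Hij).
    intros t Ht. apply in_seq in Ht. unfold labf. rewrite He by lia. reflexivity.
Qed.

Definition mtch M m (w : list nat) (f : nat -> nat) := forall i, i < 2 * m -> f (M - m + i) = nth i w 0.
Definition ext m w := length w = 2 * m /\ forall M, m <= M -> exists f, FS (2 * M) f /\ mtch M m w f.

Lemma bad_up m w M M' : m <= M -> M <= M' -> (exists f, FS (2 * M') f /\ mtch M' m w f) -> (exists f, FS (2 * M) f /\ mtch M m w f).
Proof.
  intros Hm HM [f [Hf Hmt]]. exists (fun i => f (M' - M + i)). split.
  - apply (FS_shift (2 * M')); auto; lia.
  - intros i Hi. rewrite <- Hmt by auto. f_equal. lia.
Qed.

Lemma unif (P : nat -> nat -> Prop) N : (forall a, a < N -> exists M, forall M', M <= M' -> P a M') ->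
  exists M, forall a, a < N -> forall M', M <= M' -> P a M'.
Proof.
  induction N; intros H. exists 0. intros; lia.
  destruct IHN as [M1 H1]. intros a Ha; apply H; lia.
  destruct (H N ltac:(lia)) as [M2 H2].
  exists (M1 + M2). intros a Ha M' HM'. destruct (Nat.eq_dec a N). subst. apply H2; lia. apply H1; lia.
Qed.

Lemma ext_step m w : ext m w -> exists a b, ext (S m) (a :: w ++ [b]).
Proof.
  intros [Hlen Hext]. apply NNPP. intros Hno.
  assert (Hbad : forall a b, a < NN -> b < NN -> exists M, forall M', M <= M' -> ~ (exists f, FS (2 * M') f /\ mtch M' (S m) (a :: w ++ [b]) f)).
  { intros a b Ha Hb. apply NNPP. intros Hc. apply Hno. exists a, b. split.
    - simpl. rewrite length_app, Hlen. simpl. lia.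
    - intros M HM. apply NNPP. intros Hc2. apply Hc. exists M. intros M' HM' Hc3. apply Hc2.
      apply (bad_up _ _ M M'); auto. }
  assert (Hu : exists M, forall a, a < NN -> forall M', M <= M' -> forall b, b < NN -> ~ (exists f, FS (2 * M') f /\ mtch M' (S m) (a :: w ++ [b]) f)).
  { apply unif. intros a Ha.
    destruct (unif (fun b M' => ~ (exists f, FS (2 * M') f /\ mtch M' (S m) (a :: w ++ [b]) f)) NN) as [M HM].
    { intros b Hb. apply Hbad; auto. }
    exists M. intros M' HM' b Hb. apply HM; auto. }
  destruct Hu as [M HM].
  destruct (Hext (M + S m) ltac:(lia)) as [f [Hf Hmt]].
  set (M' := M + S m) in *.
  pose proof Hf as [Hf1 _].
  apply (HM (f (M' - m - 1)) ltac:(apply Hf1; lia) M' ltac:(lia) (f (M' + m)) ltac:(apply Hf1; lia)).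
  exists f. split; auto. intros i Hi.
  destruct i. simpl. f_equal. lia.
  simpl. destruct (Nat.lt_ge_cases i (2 * m)).
  - rewrite app_nth1 by lia. rewrite <- Hmt by auto. f_equal. lia.
  - assert (i = 2 * m) by lia. subst i. rewrite app_nth2 by lia. rewrite Hlen, Nat.sub_diag. simpl. f_equal. lia.
Qed.

Lemma ext_step' m w : ext m w -> exists p : nat * nat, ext (S m) (fst p :: w ++ [snd p]).
Proof. intros H. destruct (ext_step m w H) as [a [b Hab]]. exists (a, b). exact Hab. Qed.

Definition nextw m w : list nat :=
  match excluded_middle_informative (ext m w) with
  | left H => let p := proj1_sig (constructive_indefinite_description _ (ext_step' m w H)) in fst p :: w ++ [snd p]
  | right _ => []
  end.

Fixpoint Wn m := match m with 0 => [] | S m' => nextw m' (Wn m') end.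

Lemma nextw_spec m w : ext m w -> exists a b, nextw m w = a :: w ++ [b] /\ ext (S m) (a :: w ++ [b]).
Proof.
  intros H. unfold nextw. destruct (excluded_middle_informative (ext m w)) as [H'|H']; [|contradiction].
  set (p := proj1_sig _).
  assert (Hp : ext (S m) (fst p :: w ++ [snd p])) by (unfold p; apply proj2_sig).
  exists (fst p), (snd p). auto.
Qed.

Lemma Wn_ext (Hall : forall L, exists f, FS L f) m : ext m (Wn m) /\ exists a b, Wn (S m) = a :: Wn m ++ [b].
Proof.
  induction m.
  - assert (H0 : ext 0 []).
    { split. reflexivity. intros M _. destruct (Hall (2 * M)) as [f Hf]. exists f. split; auto. intros i Hi; lia. }
    split. exact H0. destruct (nextw_spec 0 [] H0) as [a [b [E _]]]. exists a, b. exact E.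
  - destruct IHm as [H1 [a [b E]]].
    destruct (nextw_spec m (Wn m) H1) as [a' [b' [E' H2]]].
    change (Wn (S m)) with (nextw m (Wn m)). rewrite E'. split; auto.
    destruct (nextw_spec (S m) _ H2) as [a2 [b2 [E2 _]]]. exists a2, b2.
    change (Wn (S (S m))) with (nextw (S m) (nextw m (Wn m))). rewrite E'. exact E2.
Qed.

Section WithAll.
Hypothesis Hall : forall L, exists f, FS L f.

Lemma Wn_len m : length (Wn m) = 2 * m.
Proof. destruct (Wn_ext Hall m) as [[H _] _]. exact H. Qed.

Lemma Wn_cons m d p : p < 2 * m -> nth p (Wn m) 0 = nth (p + d) (Wn (m + d)) 0.
Proof.
  intros Hp. induction d. rewrite !Nat.add_0_r. reflexivity.
  rewrite IHd. destruct (Wn_ext Hall (m + d)) as [_ [a [b E]]].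
  replace (m + S d) with (S (m + d)) by lia. rewrite E.
  replace (p + S d) with (S (p + d)) by lia. simpl.
  rewrite app_nth1; auto. rewrite Wn_len. lia.
Qed.

Lemma Wn_FS m : FS (2 * m) (fun i => nth i (Wn m) 0).
Proof.
  destruct (Wn_ext Hall m) as [[_ H] _]. destruct (H m (le_n _)) as [f [Hf Hm]].
  apply (FS_ext _ f); auto. intros i Hi. rewrite <- Hm by auto. f_equal. lia.
Qed.

Definition ee (z : Z) : nat :=
  let m := S (Z.to_nat (Z.abs z)) in nth (Z.to_nat (z + Z.of_nat m)) (Wn m) 0.

Lemma ee_win m p : p < 2 * m -> ee (Z.of_nat p - Z.of_nat m) = nth p (Wn m) 0.
Proof.
  intros Hp. unfold ee. set (z := (Z.of_nat p - Z.of_nat m)%Z).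
  set (m0 := S (Z.to_nat (Z.abs z))). set (q := Z.to_nat (z + Z.of_nat m0)).
  assert (Hq : q < 2 * m0) by (unfold q, m0, z; lia).
  rewrite (Wn_cons m0 m q Hq), (Wn_cons m m0 p Hp).
  replace (m + m0) with (m0 + m) by lia. f_equal. unfold q, m0, z. lia.
Qed.

Lemma ee_FS m : FS (2 * m) (fun t => ee (Z.of_nat t - Z.of_nat m)).
Proof. apply (FS_ext _ _ _ (Wn_FS m)). intros i Hi. rewrite ee_win; auto. Qed.
End WithAll.

Section Snake.
Variable e : Z -> nat.
Hypothesis HW : forall m, FS (2 * m) (fun t => e (Z.of_nat t - Z.of_nat m)).

Definition av z := letter_val inv k s (snd (trp (e z))).
Fixpoint omP n := match n with 0 => one | S n' => mul (omP n') (av (Z.of_nat n')) end.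
Fixpoint omN n := match n with 0 => one | S n' => mul (omN n') (inv (av (- Z.of_nat (S n')))) end.
Definition omega z := if Z.leb 0 z then omP (Z.to_nat z) else omN (Z.to_nat (- z)).

Lemma omega_pos n : omega (Z.of_nat n) = omP n.
Proof. unfold omega. destruct (Z.leb_spec 0 (Z.of_nat n)); [|lia]. rewrite Nat2Z.id. reflexivity. Qed.
Lemma omega_neg n : omega (- Z.of_nat n) = omN n.
Proof.
  unfold omega. destruct (Z.leb_spec 0 (- Z.of_nat n)).
  - assert (n = 0) by lia. subst. reflexivity.
  - rewrite Z.opp_involutive, Nat2Z.id. reflexivity.
Qed.

Lemma omega_step z : omega (z + 1) = mul (omega z) (av z).
Proof.
  destruct (Z.leb_spec 0 z).
  - replace z with (Z.of_nat (Z.to_nat z)) by lia. set (n := Z.to_nat z).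
    replace (Z.of_nat n + 1)%Z with (Z.of_nat (S n)) by lia. rewrite !omega_pos. reflexivity.
  - set (n := Z.to_nat (- z - 1)).
    replace z with (- Z.of_nat (S n))%Z by lia.
    replace (- Z.of_nat (S n) + 1)%Z with (- Z.of_nat n)%Z by lia.
    rewrite !omega_neg. simpl omN. destruct HG as [A L I].
    rewrite <- A, I, mul_one_r. reflexivity.
Qed.

Lemma omega_word b p d :
  omega (Z.of_nat (p + d) + b) = mul (omega (Z.of_nat p + b)) (word_val mul one inv k s (map (labf (fun t => e (Z.of_nat t + b))) (seq p d))).
Proof.
  revert p. induction d; intros p.
  - simpl. rewrite Nat.add_0_r, mul_one_r. reflexivity.
  - simpl. replace (p + S d) with (S p + d) by lia. rewrite IHd.
    destruct HG as [A L I]. rewrite A. f_equal.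
    replace (Z.of_nat (S p) + b)%Z with ((Z.of_nat p + b) + 1)%Z by lia. rewrite omega_step. reflexivity.
Qed.

Lemma win z : exists m p, p + 1 < 2 * m /\ z = (Z.of_nat p - Z.of_nat m)%Z.
Proof.
  exists (S (S (Z.to_nat (Z.abs z)))), (Z.to_nat (z + Z.of_nat (S (S (Z.to_nat (Z.abs z)))))). lia.
Qed.

Lemma ee_lt z : e z < NN /\ snd (fst (trp (e z))) = fst (fst (trp (e (z + 1)))).
Proof.
  destruct (win z) as [m [p [Hp Hz]]]. destruct (HW m) as [H1 [H2 _]].
  split.
  - subst z. apply (H1 p). lia.
  - specialize (H2 p Hp). simpl in H2. subst z. rewrite H2. f_equal. f_equal. f_equal. f_equal. lia.
Qed.

Lemma omega_inj i j : omega i = omega j -> i = j.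
Proof.
  assert (Hlt : forall i j, (i < j)%Z -> omega i <> omega j).
  { clear i j. intros i j Hij Heq.
    set (m := S (Z.to_nat (Z.abs i) + Z.to_nat (Z.abs j))).
    set (p := Z.to_nat (i + Z.of_nat m)). set (q := Z.to_nat (j + Z.of_nat m)).
    destruct (HW m) as [_ [_ H3]].
    apply (H3 p q ltac:(unfold p, q, m; lia)).
    pose proof (omega_word (- Z.of_nat m) p (q - p)) as Hw.
    replace (p + (q - p)) with q in Hw by (unfold p, q, m; lia).
    replace (Z.of_nat q + - Z.of_nat m)%Z with j in Hw by (unfold q, m; lia).
    replace (Z.of_nat p + - Z.of_nat m)%Z with i in Hw by (unfold p, m; lia).
    rewrite <- Heq in Hw.
    change (fun t => e (Z.of_nat t - Z.of_nat m)%Z) with (fun t => e (Z.of_nat t + - Z.of_nat m)%Z).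
    set (W := word_val _ _ _ _ _ _) in *.
    destruct HG as [A L I].
    transitivity (mul (mul (inv (omega i)) (omega i)) W). rewrite I, L; reflexivity.
    rewrite <- A, <- Hw. apply I. }
  intros H. destruct (Z.lt_trichotomy i j) as [h|[h|h]]; auto.
  - exfalso. apply (Hlt i j h H).
  - exfalso. apply (Hlt j i h). auto.
Qed.

Lemma snake_of_e : Valid1 -> has_snake mul inv k s T.
Proof.
  intros HV. exists omega, (fun z => fst (fst (trp (e z)))). split; [|split].
  - apply omega_inj.
  - intros z. destruct (ee_lt z) as [H _]. pose proof (trp_In _ H). destruct (trp (e z)) as [[a b] c]. apply (HV a b c H0).
  - intros z. destruct (ee_lt z) as [Hn Hc].
    assert (Hst : mul (inv (omega z)) (omega (z + 1)) = av z).
    { rewrite omega_step. destruct HG as [A L I]. rewrite A, I, L. reflexivity. }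
    rewrite Hst. pose proof (trp_In _ Hn). 
    exists (snd (trp (e z))). split.
    + destruct (trp (e z)) as [[a b] c]. apply (HV a b c H).
    + split. reflexivity. exists (snd (trp (e z))). split; [|reflexivity].
      rewrite <- Hc. destruct (trp (e z)) as [[a b] c]. exact H.
Qed.
End Snake.

Lemma FS_of_snake : has_snake mul inv k s T -> forall L, exists f, FS L f.
Proof.
  intros [om [ze [Hinj [Hze Hst]]]] L.
  assert (Hc : forall i : nat, exists j, j < NN /\ trp j = (ze (Z.of_nat i), ze (Z.of_nat i + 1)%Z, snd (trp j)) /\
       letter_val inv k s (snd (trp j)) = mul (inv (om (Z.of_nat i))) (om (Z.of_nat i + 1)%Z)).
  { intros i. destruct (Hst (Z.of_nat i)) as [l [_ [_ [l' [Hin Hl']]]]].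
    destruct (In_nth _ _ (0,0,0) Hin) as [j [Hj Ht]]. exists j. unfold trp, edgs. rewrite Ht. simpl. unfold NN, edgs. auto. }
  set (f := fun i => proj1_sig (constructive_indefinite_description _ (Hc i))).
  assert (Hf : forall i, f i < NN /\ trp (f i) = (ze (Z.of_nat i), ze (Z.of_nat i + 1)%Z, snd (trp (f i))) /\
       letter_val inv k s (snd (trp (f i))) = mul (inv (om (Z.of_nat i))) (om (Z.of_nat i + 1)%Z)).
  { intros i. unfold f. apply proj2_sig. }
  assert (Hw : forall p d, om (Z.of_nat (p + d)) = mul (om (Z.of_nat p)) (word_val mul one inv k s (map (labf f) (seq p d)))).
  { intros p d. revert p. induction d; intros p.
    - simpl. rewrite Nat.add_0_r, mul_one_r. reflexivity.
    - simpl. replace (p + S d) with (S p + d) by lia. rewrite IHd.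
      destruct HG as [A L0 I]. rewrite A. f_equal.
      unfold labf. destruct (Hf p) as [_ [_ H]]. rewrite H. rewrite A, mul_inv_r, L0. f_equal. lia. }
  exists f. split; [|split].
  - intros i _. apply Hf.
  - intros i _. destruct (Hf i) as [_ [H1 _]]. destruct (Hf (i + 1)) as [_ [H2 _]].
    rewrite H1, H2. simpl. f_equal. lia.
  - intros i j Hij Heq. specialize (Hw i (j - i)). replace (i + (j - i)) with j in Hw by lia.
    rewrite Heq, mul_one_r in Hw. apply Hinj in Hw. lia.
Qed.

Lemma snake_iff : Valid1 -> ((forall L, exists f, FS L f) <-> has_snake mul inv k s T).
Proof.
  intros HV. split.
  - intros Hall. apply (snake_of_e ee (ee_FS Hall) HV).
  - apply FS_of_snake.
Qed.
End Math.

Lemma sg0 a b c : 1 - (1 - (a + b + c)) = 0 <-> a = 0 /\ b = 0 /\ c = 0.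
Proof. lia. Qed.

Theorem corollary1 (G : Type) (mul : G -> G -> G) (one : G) (inv : G -> G)
  (HG : is_group mul one inv) (k : nat) (s : nat -> G)
  (Hgen : generates mul one inv k s)
  (Hwp : decidable_word_problem mul one inv k s) :
  infinite_snake_problem_Pi01 mul inv k s.
Proof.
  destruct Hwp as [Pw [[cw Hcw] HPw]].
  set (wpf := fun x => if excluded_middle_informative (Pw x) then 1 else 0).
  assert (Hw : forall x, mueval cw [x] (wpf x)).
  { intros x. unfold wpf. destruct (excluded_middle_informative (Pw x)); apply Hcw; auto. }
  assert (Hwpf : forall x, (wpf x = 1 /\ Pw x) \/ (wpf x = 0 /\ ~ Pw x)).
  { intros x. unfold wpf. destruct (excluded_middle_informative (Pw x)); auto. }
  set (c := compile cw 2 (R_exp k)).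
  assert (Hc : forall n m, mueval c [n; m] (Rs wpf k n m)).
  { intros n m. rewrite <- den_R. apply (compile_ok cw wpf Hw (R_exp k) [n; m]). }
  assert (Hc0 : forall n m, mueval c [n; m] 0 <-> Rs wpf k n m = 0).
  { intros n m. split. intros H. apply (mueval_det _ _ _ (Hc n m) _ H). intros H; rewrite <- H; auto. }
  exists (fun n => forall m, mueval c [n; m] 0). split.
  - exists c. split.
    + intros n m. pose proof (Hc n m). unfold Rs in *.
      destruct (C1 k (fst_ n) (snd_ n) + C2 wpf (snd_ n) + Snk wpf (snd_ n) m); simpl in H; auto.
    + intros n. reflexivity.
  - intros T. 
    assert (HR : forall m, Rs wpf k (enc_tileset T) m = 0 <->
      C1 k (VV T) (EE T) = 0 /\ C2 wpf (EE T) = 0 /\ Snk wpf (EE T) m = 0).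
    { intros m. unfold Rs, enc_tileset. rewrite fst_npair, snd_npair. change (enc_list (map enc_triple (edges T))) with (EE T). apply sg0. }
    transitivity (forall m, Rs wpf k (enc_tileset T) m = 0). { split; intros H m; apply Hc0; auto. }
    transitivity (forall m, C1 k (VV T) (EE T) = 0 /\ C2 wpf (EE T) = 0 /\ Snk wpf (EE T) m = 0). { split; intros H m; apply HR; auto. }
    setoid_rewrite (C1_iff k T).
    split.
    + intros H. assert (HV : Valid1 k T) by (apply (H 0)).
      assert (HV2 : Valid2 G inv k s T).
      { apply (C2_iff G mul one inv HG k s Pw wpf Hwpf HPw T HV). apply (H 0). }
      split. split; auto.
      apply (snake_iff G mul one inv HG k s T HV).
      intros L. apply (Snk_iff G mul one inv k s Pw wpf Hwpf HPw T L HV). apply H.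
    + intros [[HV HV2] Hs] m. split; [exact HV|split].
      * apply (C2_iff G mul one inv HG k s Pw wpf Hwpf HPw T HV). exact HV2.
      * apply (Snk_iff G mul one inv k s Pw wpf Hwpf HPw T m HV).
        apply (snake_iff G mul one inv HG k s T HV). exact Hs.
Qed.
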